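(* Let $n\ge 4$, $N=\{1,\dots,n\}$, fix $i_1\in N$ and let $\hat N^c=N\setminus\{i_1\}$. Then the inequality $$\sum_{j\in\hat N^c}\left(x_{i_1j}+x_{ji_1}\right)-\sum_{j,j'\in\hat N^c:\,j\ne j'} x_{jj'}\le 2-\frac{(n-2)(n-3)}{2}$$ defines a facet of the weak order polytope $P^n_{WO}$.
   Context: Let $N=\{1,\dots,n\}$ and $A_N=\{(i,j): i,j\in N, i\ne j\}$. A weak order on $N$ is a binary relation $W\subseteq N\times N$ that is reflexive, transitive and total; $(i,j)\in W$ is read ''$i$ is preferred over or tied with $j$''. The characteristic vector of $W$ is $x^W\in\{0,1\}^{A_N}$ with $x^W_{(i,j)}=1$ if $(i,j)\in W$ and $0$ otherwise. The weak order polytope $P^n_{WO}$ is the convex hull of the characteristic vectors of all weak orders on $N$; its points are vectors $x\in\mathbb{R}^{A_N}$ and $x_{ij}$ denotes the coordinate $x_{(i,j)}$. $P^n_{WO}$ has dimension $n(n-1)$. An inequality $\pi x\le\pi_0$ defines a facet of a polytope $P$ if it is valid for $P$ (holds for all $x\in P$) and the face $P\cap\{x:\pi x=\pi_0\}$ is nonempty, proper, and contains $\dim(P)$ affinely independent points (i.e. has dimension $\dim(P)-1$). *)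

(* Defs.v *)
From mathcomp Require Import all_boot all_order all_algebra.
Set Implicit Arguments. Unset Strict Implicit. Unset Printing Implicit Defensive.
Import Order.TTheory GRing.Theory Num.Theory.
Local Open Scope ring_scope.

(* N = {1..n} is modelled by 'I_n = {0..n-1}. *)

Definition arc (n : nat) := {p : 'I_n * 'I_n | p.1 != p.2}.

Definition vec (R : Type) (n : nat) := arc n -> R.

(* x_{ij} for i <> j (0 when i = j, never used there) *)
Definition xc (R : pzRingType) (n : nat) (x : vec R n) (i j : 'I_n) : R :=
  match insub (i, j) : option (arc n) with Some a => x a | None => 0 end.

Definition weak_order (n : nat) (W : rel 'I_n) : Prop :=
  reflexive W /\ transitive W /\ total W.

Definition charvec (R : pzRingType) (n : nat) (W : rel 'I_n) : vec R n :=
  fun a => if W (val a).1 (val a).2 then 1 else 0.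

Definition P_WO (R : realFieldType) (n : nat) (x : vec R n) : Prop :=
  exists (k : nat) (lam : 'I_k -> R) (W : 'I_k -> rel 'I_n),
    (forall t, weak_order (W t)) /\ (forall t, 0 <= lam t) /\
    \sum_(t < k) lam t = 1 /\
    (forall a, x a = \sum_(t < k) lam t * charvec R (W t) a).

Definition aff_indep (R : pzRingType) (n m : nat) (y : 'I_m -> vec R n) : Prop :=
  forall mu : 'I_m -> R,
    \sum_(t < m) mu t = 0 ->
    (forall a, \sum_(t < m) mu t * y t a = 0) ->
    forall t, mu t = 0.

(* "f x <= b defines a facet of P", where P has dimension d and f is the
   (linear) left-hand side of the inequality. *)
Definition is_facet (R : realFieldType) (n : nat) (P : vec R n -> Prop) (d : nat)
  (f : vec R n -> R) (b : R) : Prop :=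
  (forall x, P x -> f x <= b) /\
  (exists x, P x /\ f x = b) /\
  (exists x, P x /\ f x != b) /\
  (exists y : 'I_d -> vec R n,
      (forall t, P (y t) /\ f (y t) = b) /\ aff_indep y).

Definition lhs7 (R : pzRingType) (n : nat) (i1 : 'I_n) (x : vec R n) : R :=
  \sum_(j < n | j != i1) (xc x i1 j + xc x j i1)
  - \sum_(j < n | j != i1) \sum_(j' < n | (j' != i1) && (j' != j)) xc x j j'.

(* Main.v *)
Require Import Defs.
From mathcomp Require Import all_boot all_order all_algebra.
From mathcomp Require Import ring lra zify.
From Stdlib Require Import FunctionalExtensionality.
Set Implicit Arguments. Unset Strict Implicit. Unset Printing Implicit Defensive.
Import Order.TTheory GRing.Theory Num.Theory.
Local Open Scope ring_scope.


Lemma xcE (R : pzRingType) (n : nat) (x : vec R n) (u v : 'I_n) (H : (u, v).1 != (u, v).2) :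
  xc x u v = x (exist _ (u, v) H).
Proof. by rewrite /xc insubT. Qed.

Lemma xc_diag (R : pzRingType) (n : nat) (x : vec R n) (u : 'I_n) : xc x u u = 0.
Proof. by rewrite /xc insubF //= eqxx. Qed.

Lemma xc_ext (R : pzRingType) (n : nat) (x y : vec R n) :
  (forall a, x a = y a) -> forall u v, xc x u v = xc y u v.
Proof. by move=> H u v; rewrite /xc; case: insub. Qed.

Lemma xc_charvec (R : pzRingType) (n : nat) (W : rel 'I_n) u v : u != v ->
  xc (charvec R W) u v = if W u v then 1 else 0.
Proof. by move=> H; rewrite (xcE _ H). Qed.

Definition rk (n : nat) (f : 'I_n -> nat) : rel 'I_n := fun u v => (f v <= f u)%N.

Lemma rk_weak (n : nat) (f : 'I_n -> nat) : weak_order (rk f).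
Proof.
split; first by move=> u; exact: leqnn.
split; first by move=> v u w; rewrite /rk => H1 H2; exact: leq_trans H2 H1.
by move=> u v; rewrite /rk leq_total.
Qed.

Lemma card_arc (n : nat) : #|{: Defs.arc n}| = (n * (n - 1))%N.
Proof.
rewrite card_sig.
have -> : #|[pred p : 'I_n * 'I_n | p.1 != p.2]| = (#|{: 'I_n * 'I_n}| - #|[pred p : 'I_n * 'I_n | p.1 == p.2]|)%N.
  rewrite -(cardC [pred p : 'I_n * 'I_n | p.1 == p.2]) addKn.
  by apply: eq_card => p; rewrite !inE.
rewrite card_prod card_ord.
have -> : #|[pred p : 'I_n * 'I_n | p.1 == p.2]| = #|'I_n|.
  rewrite -(card_image (f := fun i : 'I_n => (i, i))); last by move=> i j [].
  apply: eq_card => [[a b]]; rewrite !inE /=; apply/eqP/imageP => [->|[i _ [-> ->]]] //.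
  by exists b.
by rewrite card_ord mulnBr muln1.
Qed.


Lemma sumrD (R : nmodType) (I : Type) (r : seq I) (P : pred I) (F G : I -> R) :
  \sum_(i <- r | P i) (F i + G i) = \sum_(i <- r | P i) F i + \sum_(i <- r | P i) G i.
Proof. by rewrite big_split. Qed.

Lemma sumD1 (R : nmodType) (I : finType) (j : I) (P : pred I) (F : I -> R) :
  P j -> \sum_(i | P i) F i = F j + \sum_(i | P i && (i != j)) F i.
Proof. exact: bigD1. Qed.

Lemma lhs7_split (R : realFieldType) (n : nat) (i1 j0 : 'I_n) (x : vec R n) : j0 != i1 ->
 lhs7 i1 x = (xc x i1 j0 + xc x j0 i1)
  + \sum_(j < n | (j != i1) && (j != j0)) ((xc x i1 j + xc x j i1) - (xc x j0 j + xc x j j0))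
  - \sum_(j < n | (j != i1) && (j != j0)) \sum_(j' < n | ((j' != i1) && (j' != j)) && (j' != j0)) xc x j j'.
Proof.
move=> Hj0; rewrite /lhs7 (@sumD1 _ _ j0) // [in X in _ - X](@sumD1 _ _ j0) //.
rewrite [in X in _ - (_ + X)](eq_bigr (fun j => xc x j j0 + \sum_(j' < n | ((j' != i1) && (j' != j)) && (j' != j0)) xc x j j')); last first.
  move=> j /andP [Hj1 Hj2]; rewrite (@sumD1 _ _ j0) //= Hj0 /= eq_sym Hj2 //.
rewrite sumrB !sumrD.
ring.
Qed.


Lemma pair_swap (R : nmodType) (I : finType) (P : pred I) (F : I -> I -> R) :
  \sum_(j | P j) \sum_(j' | P j' && (j' != j)) F j j' =
  \sum_(j | P j) \sum_(j' | P j' && (j' != j)) F j' j.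
Proof.
rewrite (exchange_big_dep P) /=; last by move=> i j _ /andP[].
apply: eq_bigr => j Pj; apply: eq_bigl => i.
by rewrite Pj eq_sym.
Qed.

Lemma sum1R (R : pzSemiRingType) (I : finType) (P : pred I) :
  \sum_(i | P i) (1 : R) = #|P|%:R.
Proof. by rewrite sumr_const. Qed.

Lemma card_D1 (I : finType) (P : pred I) (j : I) : P j ->
  #|[pred j' | P j' && (j' != j)]| = (#|P| - 1)%N.
Proof.
move=> Pj; rewrite (cardD1 j P) [j \in P]Pj add1n subSS subn0.
by apply: eq_card => i; rewrite !inE andbC.
Qed.

Lemma pair_count (R : pzSemiRingType) (I : finType) (P : pred I) :
  \sum_(j | P j) \sum_(j' | P j' && (j' != j)) (1 : R) = (#|P| * (#|P| - 1))%:R.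
Proof.
rewrite (eq_bigr (fun _ => (#|P| - 1)%:R)); last first.
  by move=> j Pj; rewrite sum1R card_D1.
by rewrite sumr_const -mulrnA mulnC.
Qed.

Lemma xc_rk (R : pzRingType) (n : nat) (f : 'I_n -> nat) (u v : 'I_n) : u != v ->
  xc (charvec R (rk f)) u v = if (f v <= f u)%N then 1 else 0.
Proof. by move=> H; rewrite xc_charvec. Qed.

Lemma xc_rk_pair (R : realFieldType) (n : nat) (f : 'I_n -> nat) (u v : 'I_n) : u != v ->
  f u != f v -> xc (charvec R (rk f)) u v + xc (charvec R (rk f)) v u = 1.
Proof.
move=> H1 H2; rewrite !xc_rk // 1?eq_sym //.
case: (leqP (f v) (f u)) => H3; case: (leqP (f u) (f v)) => H4 //; try lia.
- by rewrite addr0.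
- by rewrite add0r.
Qed.

Lemma pair_sum_inj (R : realFieldType) (n : nat) (f : 'I_n -> nat) (P : pred 'I_n) :
  (forall u v, P u -> P v -> u != v -> f u != f v) ->
  \sum_(j | P j) \sum_(j' | P j' && (j' != j)) xc (charvec R (rk f)) j j'
   = (#|P| * (#|P| - 1))%:R / 2.
Proof.
move=> Hinj.
set S := \sum_(j | P j) _.
have H2 : S + S = (#|P| * (#|P| - 1))%:R.
  rewrite {2}/S (pair_swap P (fun j j' => xc (charvec R (rk f)) j j')) /S -sumrD -pair_count.
  apply: eq_bigr => j Pj; rewrite -sumrD; apply: eq_bigr => j' /andP [Pj' Hj'].
  by apply: xc_rk_pair; rewrite 1?eq_sym //; apply: Hinj; rewrite // eq_sym.
by rewrite -H2; field.
Qed.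


Definition S0 (n : nat) (i1 j0 : 'I_n) : pred 'I_n := fun j => (j != i1) && (j != j0).

Lemma card_S0 (n : nat) (i1 j0 : 'I_n) : j0 != i1 -> #|S0 i1 j0| = (n - 2)%N.
Proof.
move=> H.
have H1 : #|[pred j' | predT j' && (j' != i1)]| = (n - 1)%N.
  by rewrite (card_D1 (P := predT)) // cardT size_enum_ord.
have -> : #|S0 i1 j0| = #|[pred j | [pred j' | predT j' && (j' != i1)] j && (j != j0)]|.
  by apply: eq_card => j; rewrite !inE.
rewrite card_D1 ?H1; first lia.
by rewrite inE /= H.
Qed.

Lemma lhs7_rk (R : realFieldType) (n : nat) (i1 j0 : 'I_n) (f : 'I_n -> nat) :
  j0 != i1 ->
  (forall u v, S0 i1 j0 u -> S0 i1 j0 v -> u != v -> f u != f v) ->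
  let x := charvec R (rk f) in
  lhs7 i1 x = (xc x i1 j0 + xc x j0 i1)
  + \sum_(j < n | (j != i1) && (j != j0)) ((xc x i1 j + xc x j i1) - (xc x j0 j + xc x j j0))
  - ((n - 2) * (n - 3))%:R / 2.
Proof.
move=> Hj0 Hinj x; rewrite (lhs7_split _ Hj0); congr (_ - _).
have -> : ((n - 2) * (n - 3))%N = (#|S0 i1 j0| * (#|S0 i1 j0| - 1))%N.
  rewrite card_S0 //; congr (_ * _)%N; lia.
rewrite -(pair_sum_inj R Hinj).
apply: eq_bigr => j _; apply: eq_bigl => j'.
by rewrite /S0 -!andbA; congr (_ && _); rewrite andbC.
Qed.


Definition bnd (R : realFieldType) (n : nat) : R := 2 - ((n - 2) * (n - 3))%:R / 2.

Lemma tight_rk (R : realFieldType) (n : nat) (i1 j0 : 'I_n) (f : 'I_n -> nat) :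
  j0 != i1 ->
  (forall u v, S0 i1 j0 u -> S0 i1 j0 v -> u != v -> f u != f v) ->
  f i1 = f j0 ->
  lhs7 i1 (charvec R (rk f)) = bnd R n.
Proof.
move=> Hj0 Hinj Hf; rewrite (lhs7_rk R Hj0 Hinj) /bnd.
rewrite big1; last first.
  move=> j /andP [H1 H2]; have H1' := H1; have H2' := H2; rewrite eq_sym in H1'; rewrite eq_sym in H2'.
  rewrite !xc_rk // Hf; lra.
have Hj0' := Hj0; rewrite eq_sym in Hj0'.
rewrite !xc_rk // Hf leqnn; lra.
Qed.

Lemma nontight_rk (R : realFieldType) (n : nat) (i1 j0 : 'I_n) :
  j0 != i1 ->
  lhs7 i1 (charvec R (rk (fun k : 'I_n => val k))) = bnd R n - 1.
Proof.
move=> Hj0.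
have Hinj : forall u v : 'I_n, u != v -> val u != val v by [].
rewrite (lhs7_rk R Hj0 (fun u v _ _ => Hinj u v)) /bnd.
rewrite big1; last first.
  move=> j /andP [H1 H2]; have H1' := H1; have H2' := H2; rewrite eq_sym in H1'; rewrite eq_sym in H2'.
  rewrite !xc_rk_pair //; lra.
have Hj0' := Hj0; rewrite eq_sym in Hj0'.
rewrite xc_rk_pair //; lra.
Qed.


Lemma lhs7_split2 (R : realFieldType) (n : nat) (i1 j0 : 'I_n) (x : vec R n) : j0 != i1 ->
 lhs7 i1 x = (xc x i1 j0 + xc x j0 i1)
  + \sum_(j < n | (j != i1) && (j != j0)) ((xc x i1 j + xc x j i1) - (xc x j0 j + xc x j j0))
  - \sum_(j | S0 i1 j0 j) \sum_(j' | S0 i1 j0 j' && (j' != j)) xc x j j'.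
Proof.
move=> Hj0; rewrite (lhs7_split x Hj0); congr (_ - _).
apply: eq_bigr => j _; apply: eq_bigl => j'.
by rewrite /S0 -!andbA; congr (_ && _); rewrite andbC.
Qed.

Lemma pair_sum_ge (R : realFieldType) (n : nat) (x : vec R n) (P : pred 'I_n) :
  (forall u v, P u -> P v -> u != v -> 1 <= xc x u v + xc x v u) ->
  (#|P| * (#|P| - 1))%:R / 2 <= \sum_(j | P j) \sum_(j' | P j' && (j' != j)) xc x j j'.
Proof.
move=> Hge.
set S := \sum_(j | P j) _.
have H2 : (#|P| * (#|P| - 1))%:R <= S + S.
  rewrite {2}/S (pair_swap P (fun j j' => xc x j j')) /S -sumrD -pair_count.
  apply: ler_sum => j Pj; rewrite -sumrD; apply: ler_sum => j' /andP [Pj' Hj'].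
  by apply: Hge; rewrite // eq_sym.
lra.
Qed.

Lemma ifle1 (R : realFieldType) (b : bool) : (if b then 1 else 0 : R) <= 1.
Proof. by case: b; lra. Qed.
Lemma ifge0 (R : realFieldType) (b : bool) : 0 <= (if b then 1 else 0 : R).
Proof. by case: b; lra. Qed.

Lemma valid_wo (R : realFieldType) (n : nat) (i1 j1 : 'I_n) (W : rel 'I_n) :
  j1 != i1 -> weak_order W -> lhs7 i1 (charvec R W) <= bnd R n.
Proof.
move=> Hj1 [refl [tr tot]].
set x := charvec R W.
have Hx : forall u v, u != v -> xc x u v = if W u v then 1 else 0.
  by move=> u v H; rewrite xc_charvec.
have Hpair : forall u v, u != v -> 1 <= xc x u v + xc x v u.
  move=> u v H; rewrite !Hx // 1?eq_sym //.
  by case/orP: (tot u v) => ->; case: (W _ _); lra.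
have key : forall j0, j0 != i1 ->
    xc x i1 j0 + xc x j0 i1
    + \sum_(j < n | (j != i1) && (j != j0)) ((xc x i1 j + xc x j i1) - (xc x j0 j + xc x j j0)) <= 2 ->
    lhs7 i1 x <= bnd R n.
  move=> j0 Hj0 Hle; rewrite (lhs7_split2 x Hj0) /bnd.
  have := pair_sum_ge (P := S0 i1 j0) (fun u v _ _ => Hpair u v).
  rewrite card_S0 //.
  have -> : ((n - 2) - 1)%N = (n - 3)%N by lia.
  lra.
case: (pickP [pred j | (j != i1) && W i1 j && W j i1]) => [j0 Hj | Hno].
  have /andP [/andP [Hj0 Wa] Wb] := Hj.
  apply: (key j0 Hj0).
  rewrite big1; last first.
    move=> j /andP [H1 H2].
    have H1' : i1 != j by rewrite eq_sym.
    have H2' : j0 != j by rewrite eq_sym.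
    rewrite !Hx //.
    have -> : W i1 j = W j0 j.
      apply/idP/idP => H; [exact: (tr i1 j0 j Wb H) | exact: (tr j0 i1 j Wa H)].
    have -> : W j i1 = W j j0.
      apply/idP/idP => H; [exact: (tr i1 j j0 H Wa) | exact: (tr j0 j i1 H Wb)].
    lra.
  have := ifle1 R (W i1 j0); have := ifle1 R (W j0 i1).
  have Hj0' : i1 != j0 by rewrite eq_sym.
  rewrite !Hx // Wa Wb; lra.
apply: (key j1 Hj1).
have Hone : forall j, j != i1 -> xc x i1 j + xc x j i1 = 1.
  move=> j Hj; have Hj' : i1 != j by rewrite eq_sym.
  have := Hno j; rewrite /= Hj /= !Hx //.
  by case/orP: (tot i1 j) => ->; case: (W _ _); rewrite //=; lra.
have Hmid : \sum_(j < n | (j != i1) && (j != j1)) ((xc x i1 j + xc x j i1) - (xc x j1 j + xc x j j1)) <= 0.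
  apply: (@le_trans _ _ (\sum_(j < n | (j != i1) && (j != j1)) (0:R))); last by rewrite big1.
  apply: ler_sum => j /andP [H1 H2]; rewrite Hone //.
  have := Hpair j1 j; rewrite eq_sym H2 => /(_ isT); lra.
rewrite Hone //; lra.
Qed.


Lemma xc_sum (R : realFieldType) (n k : nat) (lam : 'I_k -> R) (y : 'I_k -> vec R n) u v :
  xc (fun a => \sum_(t < k) lam t * y t a) u v = \sum_(t < k) lam t * xc (y t) u v.
Proof.
rewrite /xc; case: insub => [a|] //.
by rewrite big1 // => t _; rewrite mulr0.
Qed.

Lemma lhs7_lin (R : realFieldType) (n k : nat) (i1 : 'I_n) (lam : 'I_k -> R) (y : 'I_k -> vec R n) :
  lhs7 i1 (fun a => \sum_(t < k) lam t * y t a) = \sum_(t < k) lam t * lhs7 i1 (y t).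
Proof.
rewrite /lhs7.
under eq_bigr => j _ do rewrite !xc_sum -sumrD.
under [in X in _ - X]eq_bigr => j _ do under eq_bigr => j' _ do rewrite xc_sum.
under [in X in _ = X]eq_bigr => t _ do rewrite mulrBr !mulr_sumr.
rewrite sumrB.
under [in X in _ - X]eq_bigr => j _ do rewrite exchange_big.
rewrite exchange_big [in X in _ - X]exchange_big.
congr (_ - _).
  by apply: eq_bigr => t _; apply: eq_bigr => j _; rewrite mulrDr.
by apply: eq_bigr => t _; apply: eq_bigr => j _; rewrite mulr_sumr.
Qed.

Lemma valid_P (R : realFieldType) (n : nat) (i1 j1 : 'I_n) (x : vec R n) :
  j1 != i1 -> P_WO x -> lhs7 i1 x <= bnd R n.
Proof.
move=> Hj1 [k [lam [W [HW [Hl [Hs Hx]]]]]].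
have -> : x = (fun a => \sum_(t < k) lam t * charvec R (W t) a).
  by apply: functional_extensionality.
rewrite lhs7_lin.
apply: (@le_trans _ _ (\sum_(t < k) lam t * bnd R n)).
  apply: ler_sum => t _; apply: ler_wpM2l => //; exact: valid_wo Hj1 (HW t).
by rewrite -mulr_suml Hs mul1r.
Qed.


Definition fX (n : nat) (i1 j a : 'I_n) (k : 'I_n) : nat :=
  if (k == i1) || (k == j) || (k == a) then n else val k.
Definition fY (n : nat) (i1 j a : 'I_n) (k : 'I_n) : nat :=
  if (k == i1) || (k == j) then n.+1 else if k == a then n else val k.
Definition fZ (n : nat) (i1 j a : 'I_n) (k : 'I_n) : nat :=
  if k == a then n.+1 else if (k == i1) || (k == j) then n else val k.

Ltac split4 p i1 j a :=
  case: (p =P i1) => [->|?]; last case: (p =P j) => [->|?]; last case: (p =P a) => [->|?].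

Ltac kill_neq :=
  repeat match goal with H : ~ (?x = ?y) |- _ => rewrite ?(introF eqP H); move: H end; intros.

Ltac rwF := repeat match goal with H : (?x == ?y) = false |- context [?x == ?y] => rewrite H end.

Ltac brute p q i1 j a :=
  split4 p i1 j a; split4 q i1 j a;
  kill_neq;
  rewrite ?xpair_eqE ?eqxx //=; rwF; rewrite ?eqxx //=;
  kill_neq;
  rewrite ?xpair_eqE ?eqxx //=; rwF; rewrite ?eqxx //=;
  intros;
  repeat match goal with
  | |- context [(?x <= ?y)%N] => case: (leqP x y) => ?
  end;
  try first [lra | exfalso; lia].

Lemma diffXY (R : realFieldType) (n : nat) (i1 j a : 'I_n) (e : Defs.arc n) :
  i1 != j -> i1 != a -> j != a ->
  charvec R (rk (fX i1 j a)) e - charvec R (rk (fY i1 j a)) e =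
  (if val e == (a, i1) then 1 else 0) + (if val e == (a, j) then 1 else 0).
Proof.
move=> H1 H2 H3; have H1' := H1; have H2' := H2; have H3' := H3.
rewrite eq_sym in H1'; rewrite eq_sym in H2'; rewrite eq_sym in H3'.
move: (negbTE H1) (negbTE H2) (negbTE H3) (negbTE H1') (negbTE H2') (negbTE H3') => E1 E2 E3 E4 E5 E6.
case: e => [[p q] /= Hpq].
rewrite /charvec /rk /fX /fY /=.
have := ltn_ord p; have := ltn_ord q.
move: Hpq; rewrite /=.
brute p q i1 j a.
Qed.

Lemma diffXZ (R : realFieldType) (n : nat) (i1 j a : 'I_n) (e : Defs.arc n) :
  i1 != j -> i1 != a -> j != a ->
  charvec R (rk (fX i1 j a)) e - charvec R (rk (fZ i1 j a)) e =
  (if val e == (i1, a) then 1 else 0) + (if val e == (j, a) then 1 else 0).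
Proof.
move=> H1 H2 H3; have H1' := H1; have H2' := H2; have H3' := H3.
rewrite eq_sym in H1'; rewrite eq_sym in H2'; rewrite eq_sym in H3'.
move: (negbTE H1) (negbTE H2) (negbTE H3) (negbTE H1') (negbTE H2') (negbTE H3') => E1 E2 E3 E4 E5 E6.
case: e => [[p q] /= Hpq].
rewrite /charvec /rk /fX /fZ /=.
have := ltn_ord p; have := ltn_ord q.
move: Hpq; rewrite /=.
brute p q i1 j a.
Qed.


Ltac brute_inj p q i1 j a :=
  split4 p i1 j a; split4 q i1 j a;
  kill_neq;
  rewrite ?eqxx //=; rwF; rewrite ?eqxx //=;
  kill_neq;
  rewrite ?eqxx //=; rwF; rewrite ?eqxx //=;
  intros; try (apply/eqP; lia);
  try (match goal with Hx : is_true (?x != ?x) |- _ => by rewrite eqxx in Hx end).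

Lemma inj_fXYZ (n : nat) (i1 j a : 'I_n) :
  i1 != j -> i1 != a -> j != a ->
  forall f, [\/ f = fX i1 j a, f = fY i1 j a | f = fZ i1 j a] ->
  forall u v, S0 i1 j u -> S0 i1 j v -> u != v -> f u != f v.
Proof.
move=> H1 H2 H3; have H1' := H1; have H2' := H2; have H3' := H3.
rewrite eq_sym in H1'; rewrite eq_sym in H2'; rewrite eq_sym in H3'.
move: (negbTE H1) (negbTE H2) (negbTE H3) (negbTE H1') (negbTE H2') (negbTE H3') => E1 E2 E3 E4 E5 E6.
move=> f Hf u v; rewrite /S0.
have := ltn_ord u; have := ltn_ord v.
case: Hf => ->; rewrite /fX /fY /fZ;
brute_inj u v i1 j a.
Qed.


Definition cvec (R : realFieldType) (n : nat) (i1 : 'I_n) (e : Defs.arc n) : R :=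
  if ((val e).1 == i1) || ((val e).2 == i1) then 1 else -1.

Lemma kernel_core (R : realFieldType) (n : nat) (i1 j1 j2 j3 : 'I_n) (w : vec R n) :
  j1 != i1 -> j2 != i1 -> j3 != i1 -> j1 != j2 -> j1 != j3 -> j2 != j3 ->
  (forall j a, j != i1 -> a != i1 -> j != a -> xc w a i1 + xc w a j = 0) ->
  (forall j a, j != i1 -> a != i1 -> j != a -> xc w i1 a + xc w j a = 0) ->
  forall e : Defs.arc n, w e = xc w i1 j1 * cvec R i1 e.
Proof.
move=> H1 H2 H3 H12 H13 H23 Ea Eb.
have Hsw : forall a b, a != i1 -> b != i1 -> a != b -> xc w i1 a = xc w b i1.
  move=> a b Ha Hb Hab.
  have e1 := Eb b a Hb Ha (negbT (introF eqP (fun E => (negP Hab) (introT eqP (esym E))))).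
  have e2 := Ea a b Ha Hb Hab.
  lra.
set lam := xc w i1 j1.
have c1 : forall a, a != i1 -> xc w i1 a = lam.
  move=> a Ha; case: (eqVneq a j1) => [->|Ha1] //.
  case: (eqVneq a j2) => [->|Ha2].
    by rewrite (Hsw j2 j3) // /lam (Hsw j1 j3).
  by rewrite (Hsw a j2) // /lam (Hsw j1 j2).
have c2 : forall b, b != i1 -> xc w b i1 = lam.
  move=> b Hb; case: (eqVneq b j1) => [->|Hb1].
    by rewrite -(Hsw j2 j1) // ?c1 // eq_sym.
  by rewrite -(Hsw j1 b) // eq_sym.
have c3 : forall u v, u != i1 -> v != i1 -> u != v -> xc w u v = - lam.
  move=> u v Hu Hv Huv; have := Eb u v Hu Hv Huv; rewrite c1 //; lra.
case=> [[u v] /= Huv].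
rewrite -(xcE w Huv) /cvec /=.
case: (eqVneq u i1) => [Eu|Hu].
  by rewrite Eu /= mulr1 c1 // -Eu eq_sym.
case: (eqVneq v i1) => [Ev|Hv].
  by rewrite Ev /= mulr1 c2.
rewrite /= c3 //; lra.
Qed.


Definition Mpts (R : realFieldType) (n : nat) (K : finType) (pt : K -> vec R n) :
  'M[R]_(#|K|, #|{: Defs.arc n}|.+1) :=
  \matrix_(r, c) (match unlift ord0 c with None => 1 | Some k => pt (enum_val r) (enum_val k) end).

Lemma sum_lift (R : realFieldType) (n : nat) (y : vec R n) (z : 'rV[R]_(#|{: Defs.arc n}|.+1)) :
  \sum_(c < #|{: Defs.arc n}|.+1) z 0 c * (match unlift ord0 c with None => 1 | Some k => y (enum_val k) end)
  = z 0 0 + \sum_(e : Defs.arc n) z 0 (lift 0 (enum_rank e)) * y e.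
Proof.
rewrite big_ord_recl unlift_none mulr1; congr (_ + _).
under eq_bigr => k _ do rewrite liftK.
rewrite (reindex (@enum_rank _)) /=; last by apply: onW_bij; exact: enum_rank_bij.
by apply: eq_bigr => e _; rewrite enum_rankK.
Qed.

Lemma rank_extract (R : realFieldType) (n : nat) (K : finType) (pt : K -> vec R n)
  (zv : 'rV[R]_(#|{: Defs.arc n}|.+1)) :
  (forall z : 'rV_(#|{: Defs.arc n}|.+1),
     (forall t, z 0 0 + \sum_(e : Defs.arc n) z 0 (lift 0 (enum_rank e)) * pt t e = 0) ->
     exists lam, z = lam *: zv) ->
  exists y : 'I_(n * (n - 1)) -> vec R n, (forall t, exists k, y t = pt k) /\ aff_indep y.
Proof.
move=> Hker.
set M := Mpts pt.
have Hsub : (kermx M^T <= zv)%MS.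
  apply/row_subP => i.
  set z := row i (kermx M^T).
  have Hz : z *m M^T = 0 by apply/sub_kermxP; exact: row_sub.
  clearbody z.
  have [lam ->] : exists lam, z = lam *: zv.
    apply: Hker => t.
    have E : \sum_c z 0 c * M^T c (enum_rank t) = 0.
      by have := congr1 (fun A : 'M[R]_(1, #|K|) => A 0 (enum_rank t)) Hz; rewrite mxE [in RHS]mxE.
    rewrite -(sum_lift (pt t) z) -[RHS]E; apply: eq_bigr => c _; rewrite !mxE enum_rankK //.
  by rewrite scalemx_sub // submx_refl.
have Hrk : (n * (n - 1) <= \rank M)%N.
  have := mxrankS Hsub; have := rank_leq_row zv.
  have Hc := card_arc n; rewrite mxrank_ker mxrank_tr; lia.
set f := maxrankfun M.
exists (fun t => pt (enum_val (f (widen_ord Hrk t)))); split.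
  by move=> t; eexists.
move=> mu Hs Ha.
set v : 'rV[R]_(n * (n - 1)) := \row_t mu t.
have HX : (v *m rowsub (widen_ord Hrk) 1%:M) *m rowsub f M = 0.
  rewrite -mulmxA -rowsubE.
  apply/rowP => c; rewrite !mxE.
  case: (unliftP ord0 c) => [k ->|->].
    rewrite -[RHS](Ha (enum_val k)); apply: eq_bigr => t _.
    by rewrite !mxE liftK.
  rewrite -[RHS]Hs; apply: eq_bigr => t _.
  by rewrite !mxE unlift_none mulr1.
move/eqP: HX; rewrite (mulmx_free_eq0 _ (maxrowsub_free M)) => /eqP HX0.
move=> t.
have E : \sum_t' v 0 t' * rowsub (widen_ord Hrk) 1%:M t' (widen_ord Hrk t) = 0.
  by have := congr1 (fun A : 'M[R]_(1, \rank M) => A 0 (widen_ord Hrk t)) HX0; rewrite mxE [in RHS]mxE.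
rewrite -[RHS]E.
rewrite (bigD1 t) //= !mxE eqxx mulr1 big1 ?addr0 //.
move=> t' Ht'; rewrite !mxE.
have -> : (widen_ord Hrk t' == widen_ord Hrk t) = false.
  by apply/negbTE; rewrite -val_eqE /= val_eqE.
by rewrite mulr0.
Qed.


Lemma three (n : nat) (i1 : 'I_n) : (4 <= n)%N ->
  exists j1 j2 j3 : 'I_n, [/\ j1 != i1, j2 != i1 & j3 != i1] /\ [/\ j1 != j2, j1 != j3 & j2 != j3].
Proof.
move=> Hn.
have h0 : (0 < n)%N by lia.
have h1 : (1 < n)%N by lia.
have h2 : (2 < n)%N by lia.
have h3 : (3 < n)%N by lia.
case: i1 => [[|[|[|m]]] Hm].
- exists (Ordinal h1), (Ordinal h2), (Ordinal h3).
  by split; split; rewrite -val_eqE /= ; apply/eqP; lia.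
- exists (Ordinal h0), (Ordinal h2), (Ordinal h3).
  by split; split; rewrite -val_eqE /= ; apply/eqP; lia.
- exists (Ordinal h0), (Ordinal h1), (Ordinal h3).
  by split; split; rewrite -val_eqE /= ; apply/eqP; lia.
- exists (Ordinal h0), (Ordinal h1), (Ordinal h2).
  by split; split; rewrite -val_eqE /=; apply/eqP; lia.
Qed.

Lemma P_single (R : realFieldType) (n : nat) (W : rel 'I_n) :
  weak_order W -> P_WO (charvec R W).
Proof.
move=> HW; exists 1%N, (fun _ => 1), (fun _ => W); split => //.
split; first by move=> _; lra.
split; first by rewrite big_ord1.
by move=> a; rewrite big_ord1 mul1r.
Qed.

Lemma sum_ind (R : realFieldType) (n : nat) (w : vec R n) (u v : 'I_n) (H : (u, v).1 != (u, v).2) :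
  \sum_(e : Defs.arc n) w e * (if val e == (u, v) then 1 else 0) = xc w u v.
Proof.
rewrite (xcE w H) (bigD1 (exist _ (u, v) H)) //= eqxx mulr1 big1 ?addr0 //.
move=> e He; rewrite ifF ?mulr0 //; apply/negbTE; apply: contra He => /eqP He.
by apply/eqP; apply: val_inj.
Qed.


Definition gK (n : nat) (i1 j1 j2 : 'I_n) (t : 'I_n * 'I_n * 'I_3) : 'I_n -> nat :=
  let: (j, a, c) := t in
  if (j != i1) && (a != i1) && (j != a) then
    (if val c == 0%N then fX i1 j a else if val c == 1%N then fY i1 j a else fZ i1 j a)
  else fX i1 j1 j2.

Lemma tight_XYZ (R : realFieldType) (n : nat) (i1 j a : 'I_n) f :
  j != i1 -> a != i1 -> j != a ->
  [\/ f = fX i1 j a, f = fY i1 j a | f = fZ i1 j a] ->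
  lhs7 i1 (charvec R (rk f)) = bnd R n.
Proof.
move=> Hj Ha Hja Hf.
have Hij : i1 != j by rewrite eq_sym.
have Hia : i1 != a by rewrite eq_sym.
apply: (@tight_rk R n i1 j f Hj (inj_fXYZ Hij Hia Hja Hf)).
have E1 := negbTE Hij; have E2 := negbTE Hia; have E3 := negbTE Hja.
have E4 := negbTE Hj.
by case: Hf => ->; rewrite /fX /fY /fZ !eqxx ?E1 ?E2 ?E3 ?E4 ?orbT.
Qed.

Lemma tight_g (R : realFieldType) (n : nat) (i1 j1 j2 : 'I_n) t :
  j1 != i1 -> j2 != i1 -> j1 != j2 ->
  lhs7 i1 (charvec R (rk (gK i1 j1 j2 t))) = bnd R n.
Proof.
move=> H1 H2 H12; case: t => [[j a] c] /=.
case: ifP => [/andP [/andP [Hj Ha] Hja]|_]; last by apply: (@tight_XYZ R n i1 j1 j2) => //; apply: Or31.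
by apply: (@tight_XYZ R n i1 j a) => //; case: ifP => _; [apply: Or31|case: ifP => _; [apply: Or32|apply: Or33]].
Qed.


Lemma diff_eq (R : realFieldType) (n : nat) (K : finType) (pt : K -> vec R n) (z : 'rV[R]_(#|{: Defs.arc n}|.+1)) :
  (forall t, z 0 0 + \sum_(e : Defs.arc n) z 0 (lift 0 (enum_rank e)) * pt t e = 0) ->
  forall t t', \sum_(e : Defs.arc n) z 0 (lift 0 (enum_rank e)) * (pt t e - pt t' e) = 0.
Proof.
move=> Hz t t'.
under eq_bigr do rewrite mulrBr.
rewrite sumrB; move: (Hz t) (Hz t'); lra.
Qed.

Lemma sum_ind2 (R : realFieldType) (n : nat) (w : vec R n) (u v u' v' : 'I_n) :
  u != v -> u' != v' ->
  \sum_(e : Defs.arc n) w e * ((if val e == (u, v) then 1 else 0) + (if val e == (u', v') then 1 else 0))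
  = xc w u v + xc w u' v'.
Proof.
move=> H H'; under eq_bigr do rewrite mulrDr.
by rewrite sumrD (sum_ind w H) (sum_ind w H').
Qed.

Unset Implicit Arguments.
Set Strict Implicit.
Theorem mainTheorem7 (R : realFieldType) (n : nat) (i1 : 'I_n) :
  (4 <= n)%N ->
  is_facet (@P_WO R n) (n * (n - 1)) (lhs7 i1)
    (2 - ((n - 2) * (n - 3))%:R / 2).
Proof.
move=> Hn.
have [j1 [j2 [j3 [[H1 H2 H3] [H12 H13 H23]]]]] := three i1 Hn.
split; first by move=> x Px; exact: (valid_P H1 Px).
split.
  exists (charvec R (rk (fX i1 j1 j2))); split; first exact: P_single (rk_weak _).
  by apply: (@tight_XYZ R n i1 j1 j2) => //; apply: Or31.
split.
  exists (charvec R (rk (fun k : 'I_n => val k))); split; first exact: P_single (rk_weak _).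
  rewrite (nontight_rk R H1) /bnd; apply/negP => /eqP E; lra.
pose pt t := charvec R (rk (gK i1 j1 j2 t)).
pose t0 : 'I_n * 'I_n * 'I_3 := (j1, j2, ord0).
pose zv : 'rV[R]_(#|{: Defs.arc n}|.+1) :=
  \row_c (match unlift ord0 c with
          | None => - \sum_(e : Defs.arc n) cvec R i1 e * pt t0 e
          | Some k => cvec R i1 (enum_val k) end).
have [y [Hy Hind]] : exists y : 'I_(n * (n - 1)) -> vec R n,
    (forall t, exists k, y t = pt k) /\ aff_indep y.
  apply: (rank_extract (zv := zv)) => z Hz.
  pose w : vec R n := fun e => z 0 (lift 0 (enum_rank e)).
  have Hd := diff_eq Hz.
  have Ea : forall j a, j != i1 -> a != i1 -> j != a -> xc w a i1 + xc w a j = 0.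
    move=> j a Hj Ha Hja.
    have Haj : a != j by rewrite eq_sym.
    have Hij : i1 != j by rewrite eq_sym.
    have Hia : i1 != a by rewrite eq_sym.
    have := Hd (j, a, ord0) (j, a, @Ordinal 3 1 isT).
    rewrite /pt /gK Hj Ha Hja /=.
    under eq_bigr do rewrite diffXY //.
    by rewrite sum_ind2.
  have Eb : forall j a, j != i1 -> a != i1 -> j != a -> xc w i1 a + xc w j a = 0.
    move=> j a Hj Ha Hja.
    have Hij : i1 != j by rewrite eq_sym.
    have Hia : i1 != a by rewrite eq_sym.
    have := Hd (j, a, ord0) (j, a, @Ordinal 3 2 isT).
    rewrite /pt /gK Hj Ha Hja /=.
    under eq_bigr do rewrite diffXZ //.
    by rewrite sum_ind2.
  have Hw := kernel_core H1 H2 H3 H12 H13 H23 Ea Eb.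
  exists (xc w i1 j1).
  apply/rowP => c; rewrite !mxE.
  case: (unliftP ord0 c) => [k ->|->].
    by rewrite -Hw /w enum_valK.
  idtac.
  have := Hz t0.
  under eq_bigr => e _ do rewrite -/(w e) Hw.
  rewrite mulrN mulr_sumr.
  under [in X in _ -> _ = - X]eq_bigr => e _ do rewrite mulrA.
  lra.
exists y; split => // t.
have [k ->] := Hy t.
split; first exact: P_single (rk_weak _).
exact: tight_g.
Qed.
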